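(* Identify each ququart basis state $|1\rangle,|2\rangle,|3\rangle,|4\rangle$ of $\mathbb{C}^4$ with the two-qubit states $|00\rangle,|01\rangle,|10\rangle,|11\rangle$ respectively. Let $$L=\begin{pmatrix}1&2&3&4\\2&1&4&3\\3&4&1&2\\4&3&2&1\end{pmatrix},\quad M=\begin{pmatrix}1&2&3&4\\3&4&1&2\\4&3&2&1\\2&1&4&3\end{pmatrix},$$ $P_{16}=\sum_{l,j=1}^4|L_{lj},M_{lj}\rangle\langle l,j|$ acting on $\mathbb{C}^4\otimes\mathbb{C}^4$, and $\Phi_A(\rho)=\mathrm{Tr}_2[P_{16}\rho P_{16}^\dagger]$ (partial trace over the second ququart). Write the first ququart as qubits $(q_1,q_2)$ and the second as $(q_3,q_4)$, let $|\Psi_\pm\rangle=(|00\rangle\pm|11\rangle)/\sqrt2$, $|\Xi_\pm\rangle=(|01\rangle\pm|10\rangle)/\sqrt2$, and write $|X\rangle\otimes|Y\rangle$ for the state with $|X\rangle$ on the first qubits $(q_1,q_3)$ of the two ququarts and $|Y\rangle$ on the second qubits $(q_2,q_4)$. Consider the orthonormal basis arranged in the $4\times4$ array Row 1: $|\Psi_+\rangle|\Psi_+\rangle,\ |\Psi_+\rangle|\Psi_-\rangle,\ |\Psi_-\rangle|\Psi_+\rangle,\ |\Psi_-\rangle|\Psi_-\rangle$; Row 2: $|\Psi_+\rangle|\Xi_+\rangle,\ |\Psi_+\rangle|\Xi_-\rangle,\ -|\Psi_-\rangle|\Xi_+\rangle,\ -|\Psi_-\rangle|\Xi_-\rangle$;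 Row 3: $|\Xi_+\rangle|\Psi_+\rangle,\ -|\Xi_+\rangle|\Psi_-\rangle,\ -|\Xi_-\rangle|\Psi_+\rangle,\ |\Xi_-\rangle|\Psi_-\rangle$; Row 4: $|\Xi_+\rangle|\Xi_+\rangle,\ -|\Xi_+\rangle|\Xi_-\rangle,\ |\Xi_-\rangle|\Xi_+\rangle,\ -|\Xi_-\rangle|\Xi_-\rangle$. Fix $m$ rows and $n$ columns of this array, and consider the two-ququart pure states $|\psi\rangle$ whose expansion in this basis uses only basis vectors lying in the chosen $m$ rows and $n$ columns. Then the maximal number of nonzero eigenvalues of $\Phi_A(|\psi\rangle\langle\psi|)$ over such states equals $\min(m,n)$. *)

(* Defs.v *)
From mathcomp Require Import all_boot all_order all_algebra all_field.
Set Implicit Arguments. Unset Strict Implicit. Unset Printing Implicit Defensive.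
Import Order.TTheory GRing.Theory Num.Theory.
Local Open Scope ring_scope.

Definition adjmx {m n : nat} (A : 'M[algC]_(m, n)) : 'M[algC]_(n, m) :=
  (map_mx Num.conj A)^T.

(* Two-ququart space C^4 (x) C^4 = C^16; ququart basis state |a+1> (a : 'I_4)
   tensor |b+1> is the basis vector number 4*a+b. *)
Definition idx (a b : 'I_4) : 'I_16 := inord (4 * a + b).
Definition ket (a b : 'I_4) : 'cV[algC]_16 := delta_mx (idx a b) 0.

(* Latin squares L and M, 0-indexed (entry value v stands for ket |v+1>). *)
Definition Lnat (l j : nat) : nat :=
  match l, j with
  | 0,0 => 0 | 0,1 => 1 | 0,2 => 2 | 0,3 => 3
  | 1,0 => 1 | 1,1 => 0 | 1,2 => 3 | 1,3 => 2
  | 2,0 => 2 | 2,1 => 3 | 2,2 => 0 | 2,3 => 1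
  | 3,0 => 3 | 3,1 => 2 | 3,2 => 1 | 3,3 => 0
  | _,_ => 0 end.
Definition Mnat (l j : nat) : nat :=
  match l, j with
  | 0,0 => 0 | 0,1 => 1 | 0,2 => 2 | 0,3 => 3
  | 1,0 => 2 | 1,1 => 3 | 1,2 => 0 | 1,3 => 1
  | 2,0 => 3 | 2,1 => 2 | 2,2 => 1 | 2,3 => 0
  | 3,0 => 1 | 3,1 => 0 | 3,2 => 3 | 3,3 => 2
  | _,_ => 0 end.
Definition Lsq (l j : 'I_4) : 'I_4 := inord (Lnat l j).
Definition Msq (l j : 'I_4) : 'I_4 := inord (Mnat l j).

Definition P16 : 'M[algC]_16 :=
  \sum_(l < 4) \sum_(j < 4) ket (Lsq l j) (Msq l j) *m adjmx (ket l j).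

Definition ptrace2 (X : 'M[algC]_16) : 'M[algC]_4 :=
  \matrix_(a < 4, a' < 4) \sum_(b < 4) X (idx a b) (idx a' b).

Definition PhiA (rho : 'M[algC]_16) : 'M[algC]_4 :=
  ptrace2 (P16 *m rho *m adjmx P16).

Definition proj (psi : 'cV[algC]_16) : 'M[algC]_16 := psi *m adjmx psi.

Definition num_nonzero_eigs {n : nat} (A : 'M[algC]_n) : nat :=
  (n - mup 0 (char_poly A))%N.

(* Two-qubit states: 'cV_4 with |x y> (x,y bits) being basis vector 2*x+y. *)
Definition qket (x y : nat) : 'I_4 := inord (2 * x + y).
Definition e4 (k : nat) : 'cV[algC]_4 := delta_mx (inord k) 0.
Definition isq2 : algC := (sqrtC 2)^-1.
Definition PsiP : 'cV[algC]_4 := isq2 *: (e4 0 + e4 3).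
Definition PsiM : 'cV[algC]_4 := isq2 *: (e4 0 - e4 3).
Definition XiP  : 'cV[algC]_4 := isq2 *: (e4 1 + e4 2).
Definition XiM  : 'cV[algC]_4 := isq2 *: (e4 1 - e4 2).

(* Ququart a = qubits (a./2, a %% 2): |1>=|00>, |2>=|01>, |3>=|10>, |4>=|11>.
   First ququart = (q1,q2), second = (q3,q4).
   tens X Y = |X> on (q1,q3) and |Y> on (q2,q4). *)
Definition tens (X Y : 'cV[algC]_4) : 'cV[algC]_16 :=
  \sum_(a < 4) \sum_(b < 4)
    (X (qket a./2 b./2) 0 * Y (qket (a %% 2) (b %% 2)) 0) *: ket a b.

Definition Bnat (r c : nat) : 'cV[algC]_16 :=
  match r, c with
  | 0,0 => tens PsiP PsiP | 0,1 => tens PsiP PsiM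
  | 0,2 => tens PsiM PsiP | 0,3 => tens PsiM PsiM
  | 1,0 => tens PsiP XiP  | 1,1 => tens PsiP XiM
  | 1,2 => - tens PsiM XiP | 1,3 => - tens PsiM XiM
  | 2,0 => tens XiP PsiP  | 2,1 => - tens XiP PsiM
  | 2,2 => - tens XiM PsiP | 2,3 => tens XiM PsiM
  | 3,0 => tens XiP XiP   | 3,1 => - tens XiP XiM
  | 3,2 => tens XiM XiP   | 3,3 => - tens XiM XiM
  | _,_ => 0 end.
Definition B (r c : 'I_4) : 'cV[algC]_16 := Bnat r c.

Definition unit_state (psi : 'cV[algC]_16) : Prop :=
  \sum_(i < 16) `|psi i 0| ^+ 2 = 1.
Definition supported_in (R C : {set 'I_4}) (psi : 'cV[algC]_16) : Prop :=
  exists coef : 'I_4 -> 'I_4 -> algC,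
    (forall r c, (r \notin R) || (c \notin C) -> coef r c = 0) /\
    psi = \sum_(r < 4) \sum_(c < 4) coef r c *: B r c.

(* Main.v *)
Require Import Defs.
From mathcomp Require Import all_boot all_order all_algebra all_field.
From mathcomp Require Import zify ring.
Import Order.TTheory GRing.Theory Num.Theory.
Local Open Scope ring_scope.

Lemma idx_val (a b : 'I_4) : nat_of_ord (idx a b) = (4 * a + b)%N.
Proof. rewrite /idx inordK //; have := ltn_ord a; have := ltn_ord b; lia. Qed.

Lemma idx_eq (a b l j : 'I_4) : (idx a b == idx l j) = (a == l) && (b == j).
Proof.
rewrite -val_eqE /= !idx_val -!val_eqE /=.
have := ltn_ord a; have := ltn_ord b; have := ltn_ord l; have := ltn_ord j.
move: (a : nat) (b : nat) (l : nat) (j : nat) => x y z w *.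
apply/eqP/andP => [H|[/eqP -> /eqP ->]] //; split; apply/eqP; lia.
Qed.

Lemma sum_pick2 (F : 'I_4 -> 'I_4 -> algC) (l j : 'I_4) :
  \sum_(a < 4) \sum_(b < 4) F a b * ((l == a) && (j == b))%:R = F l j.
Proof.
rewrite (bigD1 l) //= [X in _ + X]big1 => [|a /negPf Ha]; last first.
  by apply: big1 => b _; rewrite eq_sym Ha mulr0.
rewrite addr0 (bigD1 j) //= [X in _ + X]big1 => [|b /negPf Hb]; last first.
  by rewrite eq_sym Hb andbF mulr0.
by rewrite !eqxx mulr1 addr0.
Qed.

Lemma tensE (X Y : 'cV[algC]_4) (l j : 'I_4) :
  tens X Y (idx l j) 0 = X (qket l./2 j./2) 0 * Y (qket (odd l) (odd j)) 0.
Proof.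
rewrite /tens summxE.
under eq_bigr => a _ do (rewrite summxE; under eq_bigr => b _ do rewrite mxE /ket mxE idx_eq eqxx andbT).
rewrite -!modn2.
exact: (sum_pick2 (fun a b => X (qket a./2 b./2) 0 * Y (qket (a %% 2) (b %% 2)) 0)).
Qed.

Lemma e4q (k x y : nat) : (k < 4)%N -> (x < 2)%N -> (y < 2)%N ->
  e4 k (qket x y) 0 = if k == (2 * x + y)%N then 1 else 0.
Proof.
move=> hk hx hy; rewrite /e4 /qket mxE eqxx andbT -val_eqE /= !inordK //; last lia.
by rewrite eq_sym; case: (k == _).
Qed.

Lemma qket_eq (x y k : nat) : (2 * x + y < 4)%N -> (k < 4)%N ->
  (qket x y == inord k :> 'I_4) = ((2 * x + y)%N == k).
Proof. by move=> h1 h2; rewrite /qket -val_eqE /= !inordK. Qed.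

Definition Hn (c b : nat) : algC :=
  match c, b with
  | 1,2 | 1,3 | 2,1 | 2,2 | 3,1 | 3,3 => -1
  | _,_ => 1 end.

Definition Bval (r c l j : nat) : algC :=
  if Lnat l j == r then isq2 * isq2 * Hn c (Mnat l j) else 0.

Lemma B_idx (r c l j : 'I_4) : B r c (idx l j) 0 = Bval r c l j.
Proof.
have E := fun X Y => tensE X Y l j.
case: r => [[|[|[|[|r]]]] Hr] //; case: c => [[|[|[|[|c]]]] Hc] //;
rewrite /B /= ?mxE E;
case: l {E} => [[|[|[|[|l]]]] Hl] //; case: j => [[|[|[|[|j]]]] Hj] //=;
rewrite /PsiP /PsiM /XiP /XiM !mxE !qket_eq //= /Bval /=; ring.
Qed.

Definition linv (a b : nat) : nat :=
  match a, b with
  | 0,0 => 0 | 0,1 => 2 | 0,2 => 3 | 0,3 => 1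
  | 1,0 => 2 | 1,1 => 0 | 1,2 => 1 | 1,3 => 3
  | 2,0 => 3 | 2,1 => 1 | 2,2 => 0 | 2,3 => 2
  | 3,0 => 1 | 3,1 => 3 | 3,2 => 2 | 3,3 => 0
  | _,_ => 0 end.
Definition jinv (a b : nat) : nat :=
  match a, b with
  | 0,0 => 0 | 0,1 => 2 | 0,2 => 3 | 0,3 => 1
  | 1,0 => 3 | 1,1 => 1 | 1,2 => 0 | 1,3 => 2
  | 2,0 => 1 | 2,1 => 3 | 2,2 => 2 | 2,3 => 0
  | 3,0 => 2 | 3,1 => 0 | 3,2 => 1 | 3,3 => 3
  | _,_ => 0 end.
Definition Lo (a b : 'I_4) : 'I_4 := inord (linv a b).
Definition Jo (a b : 'I_4) : 'I_4 := inord (jinv a b).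

Ltac ord4 x := case: x => [[|[|[|[|?]]]] ?] //.

Lemma Lnat_lt l j : (Lnat l j < 4)%N.
Proof. by case: l => [|[|[|[|l]]]]; case: j => [|[|[|[|j]]]]. Qed.
Lemma Mnat_lt l j : (Mnat l j < 4)%N.
Proof. by case: l => [|[|[|[|l]]]]; case: j => [|[|[|[|j]]]]. Qed.
Lemma linv_lt l j : (linv l j < 4)%N.
Proof. by case: l => [|[|[|[|l]]]]; case: j => [|[|[|[|j]]]]. Qed.
Lemma jinv_lt l j : (jinv l j < 4)%N.
Proof. by case: l => [|[|[|[|l]]]]; case: j => [|[|[|[|j]]]]. Qed.

Lemma Lsq_val l j : nat_of_ord (Lsq l j) = Lnat l j.
Proof. by rewrite /Lsq inordK // Lnat_lt. Qed.
Lemma Msq_val l j : nat_of_ord (Msq l j) = Mnat l j.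
Proof. by rewrite /Msq inordK // Mnat_lt. Qed.
Lemma Lo_val l j : nat_of_ord (Lo l j) = linv l j.
Proof. by rewrite /Lo inordK // linv_lt. Qed.
Lemma Jo_val l j : nat_of_ord (Jo l j) = jinv l j.
Proof. by rewrite /Jo inordK // jinv_lt. Qed.

Lemma LoK (l j : 'I_4) : Lo (Lsq l j) (Msq l j) = l.
Proof. apply: val_inj; rewrite /= Lo_val Lsq_val Msq_val. by ord4 l; ord4 j. Qed.
Lemma JoK (l j : 'I_4) : Jo (Lsq l j) (Msq l j) = j.
Proof. apply: val_inj; rewrite /= Jo_val Lsq_val Msq_val. by ord4 l; ord4 j. Qed.
Lemma LsqK (a b : 'I_4) : Lsq (Lo a b) (Jo a b) = a.
Proof. apply: val_inj; rewrite /= Lsq_val Lo_val Jo_val. by ord4 a; ord4 b. Qed.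
Lemma MsqK (a b : 'I_4) : Msq (Lo a b) (Jo a b) = b.
Proof. apply: val_inj; rewrite /= Msq_val Lo_val Jo_val. by ord4 a; ord4 b. Qed.

Definition w (coef : 'I_4 -> 'I_4 -> algC) (a b : 'I_4) : algC :=
  isq2 * isq2 * \sum_(c < 4) coef a c * Hn c b.

Definition psiof (coef : 'I_4 -> 'I_4 -> algC) : 'cV[algC]_16 :=
  \sum_(r < 4) \sum_(c < 4) coef r c *: B r c.

Lemma psi_idx coef (l j : 'I_4) : psiof coef (idx l j) 0 = w coef (Lsq l j) (Msq l j).
Proof.
rewrite /psiof summxE.
under eq_bigr => r _ do (rewrite summxE; under eq_bigr => c _ do rewrite mxE B_idx).
rewrite /w (bigD1 (Lsq l j)) //= [X in _ + X]big1 => [|r Hr]; last first.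
  apply: big1 => c _; rewrite /Bval.
  have -> : (Lnat l j == r) = false.
    apply/negbTE; apply: contra Hr => /eqP H; apply/eqP/val_inj; by rewrite /= Lsq_val.
  by rewrite mulr0.
rewrite addr0 /Bval Lsq_val eqxx mulr_sumr; apply: eq_bigr => c _; rewrite Msq_val; ring.
Qed.

Lemma adj_delta (i : 'I_16) : adjmx (delta_mx i (0 : 'I_1)) = delta_mx 0 i.
Proof.
rewrite /adjmx; apply/matrixP => x y; rewrite !mxE.
by rewrite andbC; case: (_ && _); rewrite /= ?conjC1 ?conjC0.
Qed.

Lemma P16E : P16 = \sum_(l < 4) \sum_(j < 4) delta_mx (idx (Lsq l j) (Msq l j)) (idx l j).
Proof.
rewrite /P16; apply: eq_bigr => l _; apply: eq_bigr => j _.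
by rewrite /ket adj_delta mul_delta_mx.
Qed.

Lemma delta_mulE (p q : 'I_16) (v : 'cV[algC]_16) i :
  (delta_mx p q *m v) i 0 = (i == p)%:R * v q 0.
Proof.
rewrite mxE (bigD1 q) //= big1 => [|k Hk]; last by rewrite mxE (negbTE Hk) andbF mul0r.
by rewrite mxE eqxx andbT addr0.
Qed.

Lemma LM_eq (a b l j : 'I_4) :
  (a == Lsq l j) && (b == Msq l j) = (Lo a b == l) && (Jo a b == j).
Proof.
apply/andP/andP => [[/eqP-> /eqP->]|[/eqP<- /eqP<-]].
  by rewrite LoK JoK.
by rewrite LsqK MsqK.
Qed.

Lemma P16_apply (v : 'cV[algC]_16) (a b : 'I_4) :
  (P16 *m v) (idx a b) 0 = v (idx (Lo a b) (Jo a b)) 0.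
Proof.
rewrite P16E mulmx_suml summxE.
under eq_bigr => l _ do (rewrite mulmx_suml summxE; under eq_bigr => j _ do
  rewrite delta_mulE idx_eq LM_eq mulrC).
exact: (sum_pick2 (fun l j => v (idx l j) 0)).
Qed.

Lemma P16_psi coef (a b : 'I_4) : (P16 *m psiof coef) (idx a b) 0 = w coef a b.
Proof. by rewrite P16_apply psi_idx LsqK MsqK. Qed.

Lemma sum4 (F : 'I_4 -> algC) : \sum_(i < 4) F i =
  F (@Ordinal 4 0 isT) + F (@Ordinal 4 1 isT) + F (@Ordinal 4 2 isT) + F (@Ordinal 4 3 isT).
Proof.
rewrite !big_ord_recr big_ord0 /=.
congr (_ + _ + _ + _); first rewrite GRing.add0r.
all: by apply: f_equal; apply: val_inj.
Qed.

Lemma isq2_sq : isq2 * isq2 = 2^-1.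
Proof. by rewrite /isq2 -expr2 exprVn sqrtCK. Qed.

Lemma isq2_conj : isq2^* = isq2.
Proof. by apply: geC0_conj; rewrite /isq2 invr_ge0 sqrtC_ge0 ler0n. Qed.

Lemma Hn_conj c b : (Hn c b)^* = Hn c b.
Proof.
case: c => [|[|[|[|c]]]]; case: b => [|[|[|[|b]]]]; by rewrite /Hn ?rmorphN1 ?conjC1.
Qed.

Lemma cM (x y : algC) : (x * y)^* = x^* * y^*.
Proof. exact: rmorphM. Qed.
Lemma cS (F : 'I_4 -> algC) : (\sum_(i < 4) F i)^* = \sum_(i < 4) (F i)^*.
Proof. exact: rmorph_sum. Qed.

Lemma w_orth coef (a a' : 'I_4) :
  \sum_(b < 4) w coef a b * (w coef a' b)^* = \sum_(c < 4) coef a c * (coef a' c)^*.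
Proof.
rewrite /w.
under eq_bigr => b _ do rewrite !cM cS.
rewrite !sum4 !cM !Hn_conj !isq2_conj /=.
transitivity (isq2 * isq2 * (isq2 * isq2) * 4 *
  (coef a (@Ordinal 4 0 isT) * (coef a' (@Ordinal 4 0 isT))^* +
   coef a (@Ordinal 4 1 isT) * (coef a' (@Ordinal 4 1 isT))^* +
   coef a (@Ordinal 4 2 isT) * (coef a' (@Ordinal 4 2 isT))^* +
   coef a (@Ordinal 4 3 isT) * (coef a' (@Ordinal 4 3 isT))^*)).
  rewrite /Hn; ring.
rewrite isq2_sq.
have -> : (2^-1 * 2^-1 * 4 : algC) = 1.
  by field.
by rewrite mul1r.
Qed.

Definition Kmx (coef : 'I_4 -> 'I_4 -> algC) : 'M[algC]_4 := \matrix_(a, c) coef a c.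

Lemma adjE m n (A : 'M[algC]_(m, n)) i j : adjmx A i j = (A j i)^*.
Proof. by rewrite /adjmx !mxE. Qed.

Lemma PhiA_psi coef : PhiA (proj (psiof coef)) = Kmx coef *m adjmx (Kmx coef).
Proof.
rewrite /PhiA /proj.
have -> : P16 *m (psiof coef *m adjmx (psiof coef)) *m adjmx P16 =
   (P16 *m psiof coef) *m adjmx (P16 *m psiof coef).
  by rewrite /adjmx map_mxM trmx_mul !mulmxA.
apply/matrixP => a a'; rewrite /ptrace2 mxE [RHS]mxE.
transitivity (\sum_(c < 4) coef a c * (coef a' c)^*); last first.
  by apply: eq_bigr => c _; rewrite /Kmx !mxE.
rewrite -w_orth; apply: eq_bigr => b _.
by rewrite [LHS]mxE big_ord1 adjE !P16_psi.
Qed.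

Lemma sum16 (F : 'I_16 -> algC) : \sum_(i < 16) F i = \sum_(a < 4) \sum_(b < 4) F (idx a b).
Proof.
rewrite pair_big /= (reindex (fun p : 'I_4 * 'I_4 => idx p.1 p.2)) //=.
exists (fun i : 'I_16 => ((inord (i %/ 4), inord (i %% 4)) : 'I_4 * 'I_4)) => [p _ | i _].
  case: p => a b /=; have := ltn_ord a; have := ltn_ord b => ha hb.
  congr pair; apply: val_inj; rewrite /= idx_val inordK; lia.
apply: val_inj; rewrite /= idx_val !inordK; have := ltn_ord i; lia.
Qed.

Lemma sumLM (G : 'I_4 -> 'I_4 -> algC) :
  \sum_(l < 4) \sum_(j < 4) G (Lsq l j) (Msq l j) = \sum_(a < 4) \sum_(b < 4) G a b.
Proof.
rewrite !pair_big /= [RHS](reindex (fun p : 'I_4 * 'I_4 => (Lsq p.1 p.2, Msq p.1 p.2))) //=.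
exists (fun p : 'I_4 * 'I_4 => (Lo p.1 p.2, Jo p.1 p.2)) => [[l j] _ | [a b] _] /=.
  by rewrite LoK JoK.
by rewrite LsqK MsqK.
Qed.

Lemma norm_psi coef :
  \sum_(i < 16) `|psiof coef i 0| ^+ 2 = \sum_(a < 4) \sum_(c < 4) coef a c * (coef a c)^*.
Proof.
rewrite sum16.
under eq_bigr => l _ do under eq_bigr => j _ do rewrite psi_idx normCK.
rewrite (sumLM (fun a b => w coef a b * (w coef a b)^*)).
by apply: eq_bigr => a _; rewrite w_orth.
Qed.


Lemma rank_mup (F : fieldType) n (A : 'M[F]_n) : (n - \rank A <= mup 0 (char_poly A))%N.
Proof.
set r := \rank A.
have rn : (r <= n)%N by apply: rank_leq_row.
set P := invmx (col_ebase A).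
have Pu : P \in unitmx by rewrite unitmx_inv col_ebase_unit.
have PA : P *m A = pid_mx r *m row_ebase A.
  by rewrite -{1}(mulmx_ebase A) /P -!mulmxA mulKmx ?col_ebase_unit.
have PA0 : forall i j : 'I_n, (r <= i)%N -> (P *m A) i j = 0.
  move=> i j ri; rewrite PA mxE big1 // => k _; rewrite !mxE.
  by rewrite ltnNge ri andbF mul0r.
set d : nat -> {poly F} := fun k => if (k < r)%N then 1 else 'X.
set N : 'M[{poly F}]_n := \matrix_(i, j)
  if (i < r)%N then ('X *: map_mx polyC P - map_mx polyC (P *m A)) i j else (P i j)%:P.
have E0 : map_mx polyC P *m char_poly_mx A = 'X *: map_mx polyC P - map_mx polyC (P *m A).
  by rewrite /char_poly_mx mulmxBr map_mxM mul_mx_scalar.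
have E : map_mx polyC P *m char_poly_mx A = diag_mx (\row_i d i) *m N.
  rewrite E0 mul_diag_mx; apply/matrixP => i j; rewrite !mxE /d.
  case: ltnP => ri; first by rewrite mul1r.
  have PA0' : \sum_(k < n) P i k * A k j = 0 by move: (PA0 i j ri); rewrite mxE.
  by rewrite PA0' polyC0 subr0.
have Ed := congr1 determinant E.
rewrite !det_mulmx det_diag det_map_mx in Ed.
have Hprod : \prod_(i < n) (\row_i d i) 0 i = 'X ^+ (n - r).
  under eq_bigr => i _ do rewrite mxE.
  rewrite -(big_mkord xpredT d) (big_cat_nat (leq0n r) rn) /=.
  rewrite big_nat_cond big1 ?mul1r; last by move=> i /andP[/andP[_ ri] _]; rewrite /d ri.
  rewrite -(prodr_const_nat r n 'X); apply: eq_big_nat => i /andP[ri _].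
  by rewrite /d ltnNge ri.
rewrite Hprod in Ed.
have cp0 : char_poly A != 0 by apply: monic_neq0; apply: char_poly_monic.
rewrite mup_geq // polyC0 subr0.
have dP : \det P != 0 by move: Pu; rewrite unitmxE unitfE.
rewrite -(dvdpZr _ _ dP) -mul_polyC -/(char_poly A) /char_poly Ed.
exact: dvdp_mulIl.
Qed.

Lemma rank_DS (S : {set 'I_4}) : (\rank ((\sum_(r in S) delta_mx r r)%R : 'M[algC]_4) <= #|S|)%N.
Proof.
rewrite -sum1_card; elim/big_rec2: _ => [|i M n _ IH]; first by rewrite mxrank0.
have := mxrank_add (delta_mx i i) M; rewrite mxrank_delta => h; exact: (leq_trans h).
Qed.

Lemma delta_mulL (q s i j : 'I_4) (M : 'M[algC]_4) :
  (delta_mx q s *m M) i j = (i == q)%:R * M s j.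
Proof.
rewrite mxE (bigD1 s) //= big1 => [|k Hk]; last by rewrite mxE (negbTE Hk) andbF mul0r.
by rewrite mxE eqxx andbT addr0.
Qed.

Lemma delta_mulR (q s i j : 'I_4) (M : 'M[algC]_4) :
  (M *m delta_mx q s) i j = M i q * (j == s)%:R.
Proof.
rewrite mxE (bigD1 q) //= big1 => [|k Hk]; last by rewrite mxE (negbTE Hk) mulr0.
by rewrite mxE eqxx /= addr0.
Qed.

Lemma rank_K (R C : {set 'I_4}) coef :
  (forall r c, (r \notin R) || (c \notin C) -> coef r c = 0) ->
  (\rank (Kmx coef) <= minn #|R| #|C|)%N.
Proof.
move=> H0; rewrite leq_min; apply/andP; split.
  have -> : Kmx coef = (\sum_(r in R) delta_mx r r) *m Kmx coef.
    apply/matrixP => a c; rewrite mulmx_suml summxE.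
    under eq_bigr => r _ do rewrite delta_mulL.
    case: (boolP (a \in R)) => aR.
      rewrite (bigD1 a) //= big1 => [|r /andP[_ Hr]]; last by rewrite eq_sym (negbTE Hr) mul0r.
      by rewrite eqxx mul1r addr0.
    rewrite big1 => [|r rR]; last by case: eqP => [Ear|_]; [move: aR; rewrite Ear rR | rewrite mul0r].
    by rewrite mxE H0 // aR.
  exact: leq_trans (mxrankM_maxl _ _) (rank_DS R).
have -> : Kmx coef = Kmx coef *m (\sum_(c in C) delta_mx c c).
  apply/matrixP => a c; rewrite mulmx_sumr summxE.
  under eq_bigr => r _ do rewrite delta_mulR.
  case: (boolP (c \in C)) => cC.
    rewrite (bigD1 c) //= big1 => [|r /andP[_ Hr]]; last by rewrite eq_sym (negbTE Hr) mulr0.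
    by rewrite eqxx mulr1 addr0.
  rewrite big1 => [|r rC]; last by case: eqP => [Ecr|_]; [move: cC; rewrite Ecr rC | rewrite mulr0].
  by rewrite mxE H0 // cC orbT.
exact: leq_trans (mxrankM_maxr _ _) (rank_DS C).
Qed.

Lemma upper (R C : {set 'I_4}) (psi : 'cV[algC]_16) :
  supported_in R C psi -> (num_nonzero_eigs (PhiA (proj psi)) <= minn #|R| #|C|)%N.
Proof.
move=> [coef [H0 ->]].
rewrite -/(psiof coef) PhiA_psi /num_nonzero_eigs.
have h1 := @rank_mup _ _ (Kmx coef *m adjmx (Kmx coef)).
have h2 := mxrankM_maxl (Kmx coef) (adjmx (Kmx coef)).
have h3 := @rank_K R C coef H0.
apply: leq_trans _ h3; apply: leq_trans _ h2.
by rewrite leq_subLR addnC -leq_subLR.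
Qed.

Definition rr (R : {set 'I_4}) (i : nat) : 'I_4 := nth ord0 (enum R) i.
Definition kk (R C : {set 'I_4}) : nat := minn #|R| #|C|.
Definition Sset (R C : {set 'I_4}) : {set 'I_4} := [set rr R (val i) | i : 'I_(kk R C)].
Definition fa (R C : {set 'I_4}) (a : 'I_4) : 'I_4 := rr C (index a (enum R)).
Definition tt (R C : {set 'I_4}) : algC := (sqrtC (kk R C)%:R)^-1.
Definition mycoef (R C : {set 'I_4}) (r c : 'I_4) : algC :=
  if (r \in Sset R C) && (c == fa R C r) then tt R C else 0.

Lemma rr_mem (R : {set 'I_4}) i : (i < #|R|)%N -> rr R i \in R.
Proof. by move=> h; rewrite -mem_enum /rr mem_nth // -cardE. Qed.

Lemma rr_inj (R : {set 'I_4}) i j : (i < #|R|)%N -> (j < #|R|)%N -> rr R i = rr R j -> i = j.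
Proof.
move=> hi hj /eqP; rewrite /rr nth_uniq ?enum_uniq // -?cardE //.
by move/eqP.
Qed.

Lemma index_rr (R : {set 'I_4}) i : (i < #|R|)%N -> index (rr R i) (enum R) = i.
Proof. by move=> h; rewrite /rr index_uniq ?enum_uniq // -cardE. Qed.

Lemma kk_R (R C : {set 'I_4}) : (kk R C <= #|R|)%N. Proof. exact: geq_minl. Qed.
Lemma kk_C (R C : {set 'I_4}) : (kk R C <= #|C|)%N. Proof. exact: geq_minr. Qed.

Lemma card_S (R C : {set 'I_4}) : #|Sset R C| = kk R C.
Proof.
rewrite card_imset ?card_ord // => i j /rr_inj h; apply: val_inj; apply: h.
  exact: leq_trans (ltn_ord i) (kk_R R C).
exact: leq_trans (ltn_ord j) (kk_R R C).
Qed.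

Lemma SP (R C : {set 'I_4}) a : a \in Sset R C ->
  exists i : 'I_(kk R C), a = rr R i.
Proof. by case/imsetP => i _ ->; exists i. Qed.

Lemma S_R {R C : {set 'I_4}} a : a \in Sset R C -> a \in R.
Proof.
case/SP => i ->; apply: rr_mem; exact: leq_trans (ltn_ord i) (kk_R R C).
Qed.

Lemma fa_rr (R C : {set 'I_4}) (i : 'I_(kk R C)) : fa R C (rr R i) = rr C i.
Proof. by rewrite /fa index_rr // (leq_trans (ltn_ord i) (kk_R R C)). Qed.

Lemma fa_C {R C : {set 'I_4}} a : a \in Sset R C -> fa R C a \in C.
Proof.
case/SP => i ->; rewrite fa_rr; apply: rr_mem; exact: leq_trans (ltn_ord i) (kk_C R C).
Qed.

Lemma fa_inj (R C : {set 'I_4}) a a' : a \in Sset R C -> a' \in Sset R C -> fa R C a = fa R C a' -> a = a'.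
Proof.
case/SP => i ->; case/SP => j ->; rewrite !fa_rr => /rr_inj h.
have -> // : (i : nat) = j.
apply: h; exact: leq_trans (ltn_ord _) (kk_C R C).
Qed.

Lemma mycoef_supp (R C : {set 'I_4}) r c : (r \notin R) || (c \notin C) -> mycoef R C r c = 0.
Proof.
rewrite /mycoef; case: (boolP (r \in Sset R C)) => //= rS.
case: eqP => // ->; by rewrite (S_R _ rS) (fa_C _ rS).
Qed.

Lemma G_entry (R C : {set 'I_4}) (a a' : 'I_4) :
  (Kmx (mycoef R C) *m adjmx (Kmx (mycoef R C))) a a' =
  if (a == a') && (a \in Sset R C) then tt R C * (tt R C)^* else 0.
Proof.
rewrite mxE.
under eq_bigr => c _ do rewrite adjE /Kmx !mxE.
case: (boolP (a \in Sset R C)) => aS; last first.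
  by rewrite andbF big1 // => c _; rewrite /mycoef (negbTE aS) mul0r.
rewrite andbT (bigD1 (fa R C a)) //= big1 => [|c Hc]; last first.
  by rewrite /mycoef aS (negbTE Hc) mul0r.
rewrite addr0 {1}/mycoef aS eqxx /=.
case: eqP => [<-|Ha]; first by rewrite /mycoef aS eqxx.
rewrite /mycoef; case: (boolP (a' \in Sset R C)) => a'S /=; last by rewrite conjC0 mulr0.
case: eqP => [E|_]; last by rewrite conjC0 mulr0.
by case: Ha; apply: (@fa_inj R C a a' aS a'S E).
Qed.

Lemma tt_sq (R C : {set 'I_4}) : tt R C * (tt R C)^* = ((kk R C)%:R)^-1.
Proof.
have h : 0 <= tt R C by rewrite /tt invr_ge0 sqrtC_ge0 ler0n.
by rewrite (geC0_conj h) /tt -expr2 exprVn sqrtCK.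
Qed.

Lemma kk_gt0 (R C : {set 'I_4}) : (0 < #|R|)%N -> (0 < #|C|)%N -> (0 < kk R C)%N.
Proof. by move=> h1 h2; rewrite /kk leq_min h1 h2. Qed.

Lemma Gdiag (R C : {set 'I_4}) (a : 'I_4) :
  (Kmx (mycoef R C) *m adjmx (Kmx (mycoef R C))) a a =
  if a \in Sset R C then ((kk R C)%:R)^-1 else 0.
Proof. by rewrite G_entry eqxx tt_sq. Qed.

Lemma unit_E (R C : {set 'I_4}) : (0 < #|R|)%N -> (0 < #|C|)%N ->
  unit_state (psiof (mycoef R C)).
Proof.
move=> h1 h2; rewrite /unit_state norm_psi.
transitivity (\sum_(a < 4) (Kmx (mycoef R C) *m adjmx (Kmx (mycoef R C))) a a).
  apply: eq_bigr => a _; rewrite mxE; apply: eq_bigr => c _.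
  by rewrite adjE /Kmx !mxE.
under eq_bigr => a _ do rewrite Gdiag.
rewrite -big_mkcond /= sumr_const card_S.
have hk := @kk_gt0 R C h1 h2.
by rewrite -(mulr_natr ((kk R C)%:R^-1)) mulVf // pnatr_eq0 -lt0n.
Qed.

Lemma count_card (P : pred 'I_4) : count P (index_enum 'I_4) = #|P|.
Proof. by rewrite cardE /enum_mem size_filter /index_enum. Qed.

Lemma eigs_E (R C : {set 'I_4}) : (0 < #|R|)%N -> (0 < #|C|)%N ->
  num_nonzero_eigs (PhiA (proj (psiof (mycoef R C)))) = kk R C.
Proof.
move=> h1 h2; have hk := @kk_gt0 R C h1 h2.
rewrite PhiA_psi /num_nonzero_eigs.
set G := Kmx (mycoef R C) *m adjmx (Kmx (mycoef R C)).
have trG : is_trig_mx G.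
  apply/is_trig_mxP => i j lij; rewrite /G G_entry.
  by case: eqP => [E|] //=; move: lij; rewrite E ltnn.
rewrite char_poly_trig // -(big_map (fun i => G i i) xpredT (fun y => 'X - y%:P)).
rewrite mu_prod_XsubC count_map count_card.
have -> : #|preim (fun i => G i i) (pred1 0)| = #|~: Sset R C|.
  apply: eq_card => i; rewrite !inE /G Gdiag.
  case: (i \in Sset R C) => /=; last by rewrite eqxx.
  by rewrite invr_eq0 pnatr_eq0 eqn0Ngt hk.
have := cardC (Sset R C); rewrite card_ord card_S.
have := kk_C R C; have := max_card (mem C); rewrite card_ord => hC hkC.
have -> : #|[predC Sset R C]| = #|~: Sset R C|.
  by apply: eq_card => i; rewrite !inE.
lia.
Qed.

Theorem theorem3 (R C : {set 'I_4}) :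
  (0 < #|R|)%N -> (0 < #|C|)%N ->
  (forall psi : 'cV[algC]_16, unit_state psi -> supported_in R C psi ->
     (num_nonzero_eigs (PhiA (proj psi)) <= minn #|R| #|C|)%N) /\
  (exists psi : 'cV[algC]_16, unit_state psi /\ supported_in R C psi /\
     num_nonzero_eigs (PhiA (proj psi)) = minn #|R| #|C|).
Proof.
move=> h1 h2; split.
  by move=> psi _ Hs; apply: upper.
exists (psiof (mycoef R C)); split; first exact: unit_E.
split; last exact: eigs_E.
exists (mycoef R C); split; last by [].
by move=> r c; apply: mycoef_supp.
Qed.
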